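(* If $G$ is a graph with no induced claw $K_{1,3}$, then $\operatorname{reg}(G)\le 2\operatorname{im}(G)$.
   Context: $\operatorname{reg}(G)=\max\{j\ge0:\widetilde H_{j-1}(\operatorname{Ind}(G[S]);\Bbbk)\neq0\text{ for some }S\subseteq V(G)\}$ over a field $\Bbbk$ ($\operatorname{Ind}$ = independence complex). $\operatorname{im}(G)$ is the induced matching number. *)

(* Defs.v *)
From HB Require Import structures.
From mathcomp Require Import all_boot all_order all_algebra.
Set Implicit Arguments. Unset Strict Implicit. Unset Printing Implicit Defensive.
Import GRing.Theory.

Definition simple_graph (V : finType) (e : rel V) : Prop :=
  symmetric e /\ irreflexive e.

Definition claw_free (V : finType) (e : rel V) : Prop :=
  ~ exists c x y z : V,
      [&& e c x, e c y, e c z, x != y, x != z, y != z,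
          ~~ e x y, ~~ e x z & ~~ e y z].

Definition induced_matching (V : finType) (e : rel V) (M : {set V * V}) : bool :=
  [forall p in M, e p.1 p.2] &&
  [forall p in M, forall q in M, (p != q) ==>
     [&& p.1 != q.1, p.1 != q.2, p.2 != q.1, p.2 != q.2,
         ~~ e p.1 q.1, ~~ e p.1 q.2, ~~ e p.2 q.1 & ~~ e p.2 q.2]].

Definition im (V : finType) (e : rel V) : nat :=
  \max_(M : {set V * V} | induced_matching e M) #|M|.

(* Faces of Ind(G[S]): independent subsets of S (the empty set included;
   a face with k elements has dimension k-1). *)
Definition ind_face (V : finType) (e : rel V) (S A : {set V}) : bool :=
  (A \subset S) && [forall x in A, forall y in A, ~~ e x y].

(* Chains are row vectors indexed by all subsets of V. *)
Definition nsub (V : finType) : nat := #|{set V}|.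
Definition sub_of (V : finType) (i : 'I_(nsub V)) : {set V} := enum_val i.

(* Boundary matrix from chains on faces with k elements to chains on faces
   with k-1 elements (row-vector convention: c *m bd k), with the usual
   signs w.r.t. the order of V given by enum_rank. For k = 0 this is the zero map; for
   k = 1 it is the augmentation (reduced complex). *)
Definition bd (K : fieldType) (V : finType) (e : rel V) (S : {set V}) (k : nat)
  : 'M[K]_(nsub V, nsub V) :=
  (\matrix_(i, j)
    (if ind_face e S (sub_of i) && (#|sub_of i| == k) then
       \sum_(v in sub_of i)
          ((sub_of j == sub_of i :\ v)%:R *
           (-1) ^+ #|[set u in sub_of i | (enum_rank u < enum_rank v)%N]|)%R
     else 0))%R.

Definition chain_on (K : fieldType) (V : finType) (e : rel V) (S : {set V})
  (k : nat) (c : 'rV[K]_(nsub V)) : Prop :=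
  forall i, ~~ (ind_face e S (sub_of i) && (#|sub_of i| == k)) -> c ord0 i = 0%R.

(* The reduced homology  H~_{j-1}(Ind(G[S]); K)  is nonzero: there is a
   (j-1)-cycle (chain on faces with j elements) that is not a boundary. *)
Definition red_hom_nonzero (K : fieldType) (V : finType) (e : rel V)
  (S : {set V}) (j : nat) : Prop :=
  exists c : 'rV[K]_(nsub V),
    [/\ chain_on e S j c, (c *m bd K e S j = 0)%R & ~~ (c <= bd K e S j.+1)%MS].

(* Main.v *)
Require Import Defs.
From mathcomp Require Import all_boot all_order all_algebra.
From mathcomp Require Import ring.
Set Implicit Arguments. Unset Strict Implicit. Unset Printing Implicit Defensive.
Import GRing.Theory.
Local Open Scope ring_scope.

Section Chains.
Variables (K : fieldType) (V : finType).

Definition sg (v : V) (B : {set V}) : K :=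
  (-1) ^+ #|[set u in B | (enum_rank u < enum_rank v)%N]|.
Definition D (f : {set V} -> K) (B : {set V}) : K :=
  \sum_(v | v \notin B) sg v B * f (v |: B).
Definition Tc (x : V) (f : {set V} -> K) (A : {set V}) : K :=
  if x \in A then sg x (A :\ x) * f (A :\ x) else 0.
Definition resx (x : V) (f : {set V} -> K) (A : {set V}) : K :=
  if x \in A then 0 else f A.
Definition linkx (x : V) (f : {set V} -> K) (A : {set V}) : K :=
  if x \in A then 0 else sg x A * f (x |: A).

Lemma sg2 (v : V) (B : {set V}) : sg v B * sg v B = 1.
Proof. by rewrite /sg -exprD addnn -mul2n exprM sqrrN !expr1n. Qed.

Lemma sg_add (v x : V) (B : {set V}) : x \notin B ->
  sg v (x |: B) = (if (enum_rank x < enum_rank v)%N then -1 else 1) * sg v B.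
Proof.
move=> xB; rewrite /sg.
have -> : [set u in x |: B | (enum_rank u < enum_rank v)%N] =
  if (enum_rank x < enum_rank v)%N then x |: [set u in B | (enum_rank u < enum_rank v)%N]
  else [set u in B | (enum_rank u < enum_rank v)%N].
  apply/setP => y; case: (eqVneq y x) => [->|yx].
    by case: ifP => h; rewrite !inE ?eqxx ?h ?(negbTE xB) /= ?andbF.
  by case: ifP => h; rewrite !inE (negbTE yx).
case: ifP => _; last by rewrite mul1r.
by rewrite cardsU1 inE (negbTE xB) /= exprS.
Qed.

Lemma sg_swap (v x : V) (B : {set V}) : v != x -> x \notin B -> v \notin B ->
  sg v (x |: B) * sg x (v |: B) = - (sg v B * sg x B).
Proof.
move=> vx xB vB; rewrite sg_add // sg_add //.
case: (ltngtP (enum_rank x) (enum_rank v)) => h.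
- ring.
- ring.
- by have := enum_rank_inj (val_inj h) => hh; rewrite hh eqxx in vx.
Qed.

Lemma D_ext (f g : {set V} -> K) (B : {set V}) : (forall A : {set V}, f A = g A) -> D f B = D g B.
Proof. by move=> h; apply: eq_bigr => v _; rewrite h. Qed.

Lemma D_add (f g : {set V} -> K) (B : {set V}) : D (fun A => f A + g A) B = D f B + D g B.
Proof. by rewrite /D -big_split; apply: eq_bigr => v _; rewrite mulrDr. Qed.

Lemma D_sub (f g : {set V} -> K) (B : {set V}) : D (fun A => f A - g A) B = D f B - D g B.
Proof. by rewrite /D -sumrB; apply: eq_bigr => v _; rewrite mulrBr. Qed.

Lemma D0 (B : {set V}) : D (fun _ => 0) B = 0.
Proof. by rewrite /D big1 // => v _; rewrite mulr0. Qed.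

Lemma DTc (x : V) (g : {set V} -> K) (B : {set V}) : (forall A : {set V}, x \in A -> g A = 0) ->
  D (Tc x g) B = g B - Tc x (D g) B.
Proof.
move=> hg; rewrite /D /Tc.
case: (boolP (x \in B)) => xB.
- have xB' : x \notin B :\ x by rewrite !inE eqxx.
  have E : \sum_(v | v \notin B :\ x) sg v (B :\ x) * g (v |: (B :\ x)) =
           \sum_(v | v \notin B) sg v (B :\ x) * g (v |: (B :\ x)).
    rewrite (bigD1 x) //= setD1K // hg // mulr0 add0r.
    apply: eq_bigl => v; rewrite !inE.
    by case: (eqVneq v x) => [->|_] /=; rewrite ?xB ?andbT.
  rewrite E hg // sub0r mulr_sumr -sumrN.
  apply: eq_bigr => v vB.
  have vx : v != x by apply: contraNneq vB => ->.
  rewrite in_setU1 xB orbT.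
  have -> : (v |: B) :\ x = v |: (B :\ x).
    apply/setP => y; rewrite !inE; case: (eqVneq y x) => [->|//]; by rewrite eq_sym (negbTE vx).
  have vB' : v \notin B :\ x by rewrite !inE negb_and vB orbT.
  rewrite -{1}(setD1K xB) mulrA sg_swap //; ring.
- rewrite (bigD1 x) //= setU11 setU1K // mulrA sg2 mul1r.
  rewrite big1 ?addr0 ?subr0 //.
  move=> v /andP [vB vx]; rewrite in_setU1 eq_sym (negbTE vx) (negbTE xB) /=.
  by rewrite mulr0.
Qed.

Lemma decomp (x : V) (f : {set V} -> K) (A : {set V}) : f A = resx x f A + Tc x (linkx x f) A.
Proof.
rewrite /resx /Tc /linkx; case: (boolP (x \in A)) => xA.
  by rewrite !inE eqxx /= setD1K // mulrA sg2 mul1r add0r.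
by rewrite addr0.
Qed.

Lemma cyc_parts (x : V) (f : {set V} -> K) : (forall B : {set V}, D f B = 0) ->
  (forall B : {set V}, D (resx x f) B = - linkx x f B) /\ (forall B : {set V}, D (linkx x f) B = 0).
Proof.
move=> Df.
have E : forall B : {set V}, D (resx x f) B + (linkx x f B - Tc x (D (linkx x f)) B) = 0.
  move=> B; rewrite -DTc; last by move=> A xA; rewrite /linkx xA.
  by rewrite -D_add -(Df B); apply: D_ext => A; rewrite -decomp.
have Dr0 : forall B : {set V}, x \in B -> D (resx x f) B = 0.
  move=> B xB; rewrite /D big1 // => v _; rewrite /resx in_setU1 xB orbT mulr0 //.
have Dl : forall B : {set V}, D (linkx x f) B = 0.
  move=> B; case: (boolP (x \in B)) => xB.
    rewrite /D big1 // => v _; rewrite /linkx in_setU1 xB orbT mulr0 //.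
  have := E (x |: B); rewrite Dr0 ?setU11 // add0r /linkx setU11 sub0r /Tc setU11.
  rewrite setU1K // => /eqP; rewrite oppr_eq0 mulf_eq0 => /orP [|/eqP //].
  by rewrite /sg signr_eq0.
split=> // B; case: (boolP (x \in B)) => xB.
  by rewrite Dr0 // /linkx xB oppr0.
have := E B; rewrite /Tc (negbTE xB) subr0 => /eqP.
by rewrite addr_eq0 => /eqP.
Qed.

End Chains.

Section Faces.
Variables (K : fieldType) (V : finType) (e : rel V).

Definition supp (S : {set V}) (k : nat) (f : {set V} -> K) :=
  forall A, f A != 0 -> ind_face e S A && (#|A| == k).
Definition ZF (S : {set V}) (k : nat) :=
  forall f : {set V} -> K, supp S k f -> (forall B, D f B = 0) ->
  exists g, supp S k.+1 g /\ forall B, f B = D g B.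

Lemma ind_faceP (S A : {set V}) :
  reflect ((A \subset S) /\ (forall y z, y \in A -> z \in A -> ~~ e y z)) (ind_face e S A).
Proof.
apply: (iffP andP) => [[h1 /forallP h2]|[h1 h2]]; split => //.
  by move=> y z yA zA; move: (h2 y) => /implyP /(_ yA) /forallP /(_ z) /implyP /(_ zA).
by apply/forallP => y; apply/implyP => yA; apply/forallP => z; apply/implyP => zA; apply: h2.
Qed.

Lemma face_mono (S S' A : {set V}) : S \subset S' -> ind_face e S A -> ind_face e S' A.
Proof.
move=> sS /ind_faceP [h1 h2]; apply/ind_faceP; split => //; exact: subset_trans sS.
Qed.

Lemma face_add (S B : {set V}) (x : V) : symmetric e -> x \in S -> ~~ e x x ->
  (forall y, y \in B -> ~~ e x y) -> ind_face e S B -> ind_face e S (x |: B).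
Proof.
move=> esym xS exx hx /ind_faceP [h1 h2]; apply/ind_faceP; split.
  by apply/subsetP => y; rewrite in_setU1 => /orP [/eqP ->//|]; apply: (subsetP h1).
move=> y z; rewrite !in_setU1 => /orP [/eqP ->|yB] /orP [/eqP ->|zB] //; try by apply: hx.
  by rewrite esym; apply: hx.
by apply: h2.
Qed.

Lemma Tc_supp (S L : {set V}) (x : V) (k : nat) (g : {set V} -> K) :
  symmetric e -> x \in S -> ~~ e x x -> L \subset S ->
  (forall y, y \in L -> ~~ e x y) -> supp L k g -> supp S k.+1 (Tc x g).
Proof.
move=> esym xS exx LS hx gs A; rewrite /Tc; case: ifP => [xA|]; last by rewrite eqxx.
rewrite mulf_eq0 negb_or => /andP [_ /gs /andP [fa /eqP ck]].
rewrite -(setD1K xA) face_add //; last exact: face_mono fa.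
  by rewrite cardsU1 !inE eqxx /= ck.
move=> y yA; apply: hx; case/ind_faceP: fa => h1 _; exact: (subsetP h1).
Qed.

Lemma Lstep (S : {set V}) (x : V) (k : nat) : symmetric e -> irreflexive e -> x \in S ->
  ZF (S :\ x) k.+1 -> ZF [set y in S | (y != x) && ~~ e x y] k -> ZF S k.+1.
Proof.
move=> esym eirr xS ZSx ZL f fs Df0.
set L := [set y in S | (y != x) && ~~ e x y].
have LSx : L \subset S :\ x by apply/subsetP => y; rewrite !inE => /andP [-> /andP [-> _]].
have LS : L \subset S by apply: subset_trans LSx (subsetDl _ _).
have [Da Dl] := cyc_parts x Df0.
have ls : supp L k (linkx x f).
  move=> A; rewrite /linkx; case: ifP => [|xA]; first by rewrite eqxx.
  rewrite mulf_eq0 negb_or => /andP [_ /fs /andP [fa /eqP ck]].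
  case/ind_faceP: fa => h1 h2; apply/andP; split.
    apply/ind_faceP; split.
      apply/subsetP => y yA; rewrite !inE.
      have yx : y != x by apply: contraFneq xA => <-.
      rewrite yx (subsetP h1) //=; last by rewrite in_setU1 yA orbT.
      by apply: h2; rewrite in_setU1 ?eqxx ?yA ?orbT.
    by move=> y z yA zA; apply: h2; rewrite in_setU1 ?yA ?zA orbT.
  by move: ck; rewrite cardsU1 xA /= add1n => -[->].
have [g' [g's g'E]] := ZL _ ls Dl.
pose c A := resx x f A + g' A.
have cs : supp (S :\ x) k.+1 c.
  move=> A; rewrite /c /resx; case: (boolP (x \in A)) => xA.
    by rewrite add0r => /g's /andP [fa ->]; rewrite andbT (face_mono LSx).
  case: (eqVneq (g' A) 0) => [->|/g's /andP [fa ->]]; last by rewrite andbT (face_mono LSx).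
  rewrite addr0 => /fs /andP [fa ->]; rewrite andbT.
  case/ind_faceP: fa => h1 h2; apply/ind_faceP; split => //.
  apply/subsetP => y yA; rewrite !inE (subsetP h1) // andbT.
  by apply: contraNneq xA => <-.
have Dc : forall B, D c B = 0.
  by move=> B; rewrite /c D_add Da -g'E addNr.
have [h [hs hE]] := ZSx c cs Dc.
exists (fun A => h A - Tc x g' A); split.
  move=> A; case: (eqVneq (Tc x g' A) 0) => [->|].
    rewrite subr0 => /hs /andP [fa ->]; rewrite andbT; apply: face_mono fa; exact: subsetDl.
  have hxL : forall y, y \in L -> ~~ e x y by move=> y; rewrite !inE => /andP [_ /andP [_ ->]].
  move=> nz _; exact: (Tc_supp esym xS (negbT (eirr x)) LS hxL g's nz).
move=> B; rewrite D_sub -hE DTc; last first.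
  move=> A xA; case: (eqVneq (g' A) 0) => // /g's /andP [/ind_faceP [/subsetP h1 _] _].
  by move: (h1 x xA); rewrite !inE eqxx /= andbF.
rewrite /c (decomp x f B).
have -> : Tc x (D g') B = Tc x (linkx x f) B by rewrite /Tc; case: ifP => // _; rewrite -g'E.
ring.
Qed.

Lemma Cone (S : {set V}) (x : V) (k : nat) : symmetric e -> x \in S ->
  (forall y, y \in S -> ~~ e x y) -> ZF S k.
Proof.
move=> esym xS hx f fs Df0.
have [Da Dl] := cyc_parts x Df0.
have rs : supp (S :\ x) k (resx x f).
  move=> A; rewrite /resx; case: (boolP (x \in A)) => xA; first by rewrite eqxx.
  move=> /fs /andP [fa ->]; rewrite andbT.
  case/ind_faceP: fa => h1 h2; apply/ind_faceP; split => //.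
  apply/subsetP => y yA; rewrite !inE (subsetP h1) // andbT.
  by apply: contraNneq xA => <-.
exists (Tc x (resx x f)); split.
  apply: (Tc_supp (L := S :\ x)) rs => //; first by apply: hx.
  - exact: subsetDl.
  - by move=> y /setD1P [_]; apply: hx.
move=> B; rewrite DTc; last by move=> A xA; rewrite /resx xA.
have -> : Tc x (D (resx x f)) B = - Tc x (linkx x f) B.
  by rewrite /Tc; case: ifP => _; rewrite ?oppr0 // Da mulrN.
by rewrite opprK -decomp.
Qed.

End Faces.

Section Main.
Variables (K : fieldType) (V : finType) (e : rel V).

Definition bnd (S : {set V}) (k : nat) := forall M : {set V * V}, induced_matching e M ->
  (forall p, p \in M -> (p.1 \in S) && (p.2 \in S)) -> (2 * #|M| < k)%N.

Lemma imP (M : {set V * V}) : reflect ((forall p, p \in M -> e p.1 p.2) /\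
  (forall p q, p \in M -> q \in M -> p != q ->
     [&& p.1 != q.1, p.1 != q.2, p.2 != q.1, p.2 != q.2,
         ~~ e p.1 q.1, ~~ e p.1 q.2, ~~ e p.2 q.1 & ~~ e p.2 q.2])) (induced_matching e M).
Proof.
apply: (iffP andP) => [[/forallP h1 /forallP h2]|[h1 h2]]; split.
- by move=> p pM; move/implyP: (h1 p); apply.
- move=> p q pM qM pq; move/implyP: (h2 p) => /(_ pM) /forallP /(_ q) /implyP /(_ qM).
  by move/implyP; apply.
- by apply/forallP => p; apply/implyP; apply: h1.
- apply/forallP => p; apply/implyP => pM; apply/forallP => q; apply/implyP => qM.
  by apply/implyP; apply: h2.
Qed.

Lemma bnd_mono (S T : {set V}) (k k' : nat) : T \subset S -> (k <= k')%N -> bnd S k -> bnd T k'.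
Proof.
move=> TS kk bS M iM MT; apply: leq_trans kk; apply: bS => // p /MT /andP [h1 h2].
by rewrite !(subsetP TS).
Qed.

Lemma bnd_add (S T : {set V}) (u v : V) (k : nat) : symmetric e -> u \in S -> v \in S -> e u v ->
  (forall y, y \in T -> [&& y \in S, y != u, y != v, ~~ e u y & ~~ e v y]) ->
  bnd S k.+2 -> bnd T k.
Proof.
move=> esym uS vS euv hT bS M iM MT.
have uvM : (u, v) \notin M.
  apply/negP => /MT /andP [/hT /and5P [_ /eqP //]].
have := bS ((u, v) |: M); rewrite cardsU1 uvM /= add1n mulnS !ltnS; apply.
  case/imP: iM => h1 h2; apply/imP; split.
    by move=> p; rewrite in_setU1 => /orP [/eqP -> //|]; apply: h1.
  move=> p q; rewrite !in_setU1 => /orP [/eqP ->|pM] /orP [/eqP ->|qM] //=.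
  - by rewrite eqxx.
  - move=> _; case/andP: (MT q qM) => /hT /and5P [_ a1 a2 a3 a4] /hT /and5P [_ b1 b2 b3 b4].
    by rewrite !(eq_sym u) !(eq_sym v) a1 a2 a3 a4 b1 b2 b3 b4.
  - move=> _; case/andP: (MT p pM) => /hT /and5P [_ a1 a2 a3 a4] /hT /and5P [_ b1 b2 b3 b4].
    by rewrite !(esym _ u) !(esym _ v) a1 a2 a3 a4 b1 b2 b3 b4.
  - by apply: h2.
move=> p; rewrite in_setU1 => /orP [/eqP -> /=|/MT /andP [/hT /and5P [-> _ _ _ _] /hT /and5P [-> _ _ _ _]] //].
by rewrite uS vS.
Qed.

Lemma step (S : {set V}) (k : nat) : symmetric e -> irreflexive e -> claw_free e ->
  (forall T : {set V}, (#|T| < #|S|)%N -> forall k, bnd T k -> ZF K e T k) ->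
  bnd S k -> ZF K e S k.
Proof.
move=> esym eirr claw IH bk.
case: (boolP [exists x in S, [forall y in S, ~~ e x y]]) => [/existsP [x /andP [xS /forallP hx]] | noiso].
  apply: Cone esym xS _ => y yS; exact: (implyP (hx y) yS).
case: (set_0Vmem S) => [S0 | [u uS]].
  have k0 : (0 < k)%N.
    have := bk set0; rewrite cards0; apply.
      by apply/imP; split => p; rewrite inE.
    by move=> p; rewrite inE.
  move=> f fs _; exists (fun _ => 0); split; first by move=> A; rewrite eqxx.
  move=> B; rewrite D0; apply/eqP; apply: contraT => /fs /andP [/ind_faceP [h1 _] /eqP ck].
  move: h1; rewrite S0 subset0 => /eqP A0; move: ck; rewrite A0 cards0 => k00.
  by rewrite -k00 in k0.
have [v vS euv] : exists2 v, v \in S & e u v.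
  move/existsPn: noiso => /(_ u); rewrite uS /= => /forallPn [v].
  by rewrite negb_imply negbK => /andP [vS euv]; exists v.
have k3 : (2 < k)%N.
  have := bk [set (u, v)]; rewrite cards1; apply.
    apply/imP; split => [p|p q]; rewrite ?inE => /eqP -> //.
    by move=> /eqP ->; rewrite eqxx.
  by move=> p; rewrite inE => /eqP ->; rewrite /= uS vS.
case: k bk k3 => [|[|[|k]]] // bk _.
set H := [set y in S | (y != u) && ~~ e u y].
have HSu : H \subset S :\ u by apply/subsetP => y; rewrite !inE => /andP [-> /andP [-> _]].
have cSu : (#|S :\ u| < #|S|)%N by rewrite (cardsD1 u S) uS.
have cH : forall T : {set V}, T \subset H -> (#|T| < #|S|)%N.
  move=> T TH; apply: leq_ltn_trans cSu; apply: subset_leq_card; exact: subset_trans TH HSu.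
have Hprop : forall y : V, y \in H -> [&& y \in S, y != u, y != v & ~~ e u y].
  move=> y; rewrite !inE => /andP [-> /andP [-> euy]]; rewrite euy andbT /=.
  by apply: contraNneq euy => ->.
have noN : forall T : {set V}, T \subset H -> (forall w, w \in T -> ~~ e v w) -> ZF K e T k.+2.
  move=> T TH hT; apply: IH; first exact: cH.
  apply: (@bnd_mono T T k.+1) => //; apply: (@bnd_add S _ u v _ esym uS vS euv) => //.
  move=> y yT; case/and4P: (Hprop y (subsetP TH y yT)) => -> -> -> ->; by rewrite hT.
have yesN : forall (T : {set V}) w, T \subset H -> w \in T -> e v w -> ZF K e (T :\ w) k.+2 -> ZF K e T k.+2.
  move=> T w TH wT evw ZTw; apply: (Lstep esym eirr wT ZTw).
  set T' := [set y in T | (y != w) && ~~ e w y].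
  have T'T : T' \subset T by apply/subsetP => y; rewrite inE => /andP [].
  apply: IH; first by apply: cH; exact: subset_trans T'T TH.
  apply: (@bnd_add S T' u v k.+1 esym uS vS euv) => // y.
  rewrite inE => /andP [yT /andP [yw ewy]].
  case/and4P: (Hprop y (subsetP TH y yT)) => yS yu yv euy.
  rewrite yS yu yv euy /=.
  apply/negP => evy; apply: claw; exists v, u, w, y.
  case/and4P: (Hprop w (subsetP TH w wT)) => _ wu _ euw.
  by rewrite (esym v u) euv evw evy (eq_sym u w) wu (eq_sym u y) yu (eq_sym w y) yw euw euy ewy.
suff : forall m (T : {set V}), (#|T :&: [set y | e v y]| <= m)%N -> T \subset H -> ZF K e T k.+2.
  move=> hh; apply: Lstep esym eirr uS _ (hh _ _ (leqnn _) (subxx _)).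
  apply: IH => //; apply: bnd_mono bk => //; exact: subsetDl.
elim=> [|m IHm] T Tm TH.
  apply: noN => // w wT; apply/negP => evw.
  by move: Tm; rewrite leqn0 => /eqP /cards0_eq /setP /(_ w); rewrite !inE wT evw.
case: (boolP [exists w in T, e v w]) => [/existsP [w /andP [wT evw]]|].
  apply: (yesN _ _ TH wT evw); apply: IHm; last exact: subset_trans (subsetDl _ _) TH.
  rewrite -ltnS; apply: leq_trans Tm; apply: proper_card; apply/properP; split.
    by apply: setSI; exact: subsetDl.
  by exists w; rewrite !inE ?wT ?evw ?eqxx.
move/existsPn => hw; apply: noN => // w wT; by move: (hw w); rewrite wT.
Qed.

End Main.

Section Final.
Variables (K : fieldType) (V : finType) (e : rel V).

Lemma main_claim : symmetric e -> irreflexive e -> claw_free e ->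
  forall n (S : {set V}), (#|S| <= n)%N -> forall k, bnd e S k -> ZF K e S k.
Proof.
move=> esym eirr claw; elim=> [|n IHn] S Sn k bk; apply: step => // T TS k' bT.
  by move: (leq_trans TS Sn).
by apply: IHn => //; rewrite -ltnS; apply: leq_trans TS Sn.
Qed.

Lemma Dmat (f : {set V} -> K) (B : {set V}) :
  \sum_A f A * \sum_(v in A) ((B == A :\ v)%:R *
      (-1) ^+ #|[set u in A | (enum_rank u < enum_rank v)%N]|) = D f B.
Proof.
rewrite /D.
under eq_bigr => A _ do rewrite big_distrr /= big_mkcond /=.
rewrite exchange_big /= [RHS]big_mkcond /=; apply: eq_bigr => v _.
case: (boolP (v \in B)) => vB.
  apply: big1 => A _; case: ifP => // vA.
  have -> : (B == A :\ v) = false.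
    by apply/negbTE; apply: contraTneq vB => ->; rewrite !inE eqxx.
  by rewrite mul0r mulr0.
rewrite (bigD1 (v |: B)) //= setU11 setU1K // eqxx mul1r.
rewrite big1 ?addr0.
  have := sg_add K v vB; rewrite ltnn mul1r /sg => ->.
  by rewrite mulrC.
move=> A AvB; case: ifP => // vA.
have -> : (B == A :\ v) = false.
  apply/negbTE; apply: contraNneq AvB => ->; by rewrite setD1K.
by rewrite mul0r mulr0.
Qed.

Lemma conv (S : {set V}) (k : nat) (c : 'rV[K]_(nsub V)) (f : {set V} -> K) (i : 'I_(nsub V)) :
  (forall A, c ord0 (enum_rank A) = f A) -> supp e S k f ->
  (c *m bd K e S k) ord0 i = D f (sub_of i).
Proof.
move=> cf fs; rewrite mxE -Dmat.
rewrite (reindex (@enum_rank _)) /=; last exact: onW_bij (enum_rank_bij _).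
apply: eq_bigr => A _; rewrite cf mxE /sub_of enum_rankK.
case: ifP => // nf; case: (eqVneq (f A) 0) => [->|/fs]; first by rewrite !mul0r.
by rewrite nf.
Qed.

End Final.

Theorem mainTheorem9 (K : fieldType) (V : finType) (e : rel V) :
  simple_graph e -> claw_free e ->
  forall (S : {set V}) (j : nat), red_hom_nonzero K e S j -> (j <= 2 * im e)%N.
Proof.
move=> [esym eirr] claw S j [c [cs cb nb]].
rewrite leqNgt; apply/negP => hj.
have bS : bnd e S j.
  move=> M iM _; apply: leq_ltn_trans hj; rewrite leq_mul2l; apply/orP; right.
  exact: leq_bigmax_cond.
have Z := @main_claim K V e esym eirr claw _ S (leqnn _) j bS.
pose f A := c ord0 (enum_rank A).
have fs : supp e S j f.
  move=> A; apply: contraR => nA; rewrite /f; apply/eqP; apply: cs.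
  by rewrite /sub_of enum_rankK.
have Df : forall B, D f B = 0.
  move=> B; have := @conv K V e S j c f (enum_rank B) (fun A => erefl) fs.
  by rewrite cb mxE /sub_of enum_rankK => ->.
have [g [gs gE]] := Z f fs Df.
move/negP: nb; apply; apply/submxP; exists (\row_i g (sub_of i)).
apply/rowP => i; rewrite (@conv K V e S j.+1 _ g) //.
  by rewrite -gE /f /sub_of enum_valK.
by move=> A; rewrite mxE /sub_of enum_rankK.
Qed.
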